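(* Let $\Gamma_0>0$. There exist $h_0>0$, $C_0>0$ and $\eta_0>0$ such that for all $h\in(0,h_0)$ and every eigenpair $(\lambda,\psi)$ of $\mathcal H_{\mathsf{BO},\mathsf{Tri}}(h)$ with $|\lambda-\frac18|\le\Gamma_0h^{2/3}$, $$\int_{-\pi\sqrt2}^0e^{\eta_0h^{-1}|x|^{3/2}}\big(|\psi|^2+|h^{2/3}\partial_x\psi|^2\big)\,dx\le C_0\|\psi\|^2.$$
   Context: For $h>0$, $\mathcal H_{\mathsf{BO},\mathsf{Tri}}(h)=-h^2\partial_x^2+\frac{\pi^2}{4(x+\pi\sqrt2)^2}$ is the Dirichlet realization on $L^2((-\pi\sqrt2,0))$; $\|\cdot\|$ is the $L^2((-\pi\sqrt2,0))$ norm. *)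

(* Defs.v *)
From Stdlib Require Import Reals Lra.
From Coquelicot Require Import Coquelicot.
Open Scope R_scope.

Definition aBO : R := - (PI * sqrt 2).

Definition VBO (x : R) : R := PI ^ 2 / (4 * (x + PI * sqrt 2) ^ 2).

Definition in_I (x : R) : Prop := aBO < x < 0.

(* A real function f is an eigenfunction of the Dirichlet realization of
   -h^2 d^2/dx^2 + V on L^2((-pi sqrt 2, 0)) for the real eigenvalue lam:
   - f is twice differentiable on the open interval and solves the ODE there;
   - f is in the form domain H^1_0: f' is square integrable and f tends to 0
     at both endpoints (Dirichlet condition). *)
Definition eigen_fun (h lam : R) (f : R -> R) : Prop :=
  (forall x, in_I x -> ex_derive f x /\ ex_derive (Derive f) x) /\
  (forall x, in_I x ->
      - h ^ 2 * Derive (Derive f) x + VBO x * f x = lam * f x) /\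
  ex_RInt_gen (fun x => (Derive f x) ^ 2) (at_right aBO) (at_left 0) /\
  filterlim f (at_right aBO) (locally 0) /\
  filterlim f (at_left 0) (locally 0).

(* Eigenpair (lam, psi) with psi = u + i v complex valued, nonzero. *)
Definition is_eigenpair (h lam : R) (u v : R -> R) : Prop :=
  eigen_fun h lam u /\ eigen_fun h lam v /\
  (exists x, in_I x /\ (u x <> 0 \/ v x <> 0)).

Definition L2sq (u v : R -> R) : R :=
  RInt_gen (fun x => u x ^ 2 + v x ^ 2) (at_right aBO) (at_left 0).

Definition agmon_integrand (eta h : R) (u v : R -> R) (x : R) : R :=
  exp (eta / h * Rpower (Rabs x) (3 / 2)) *
  ((u x ^ 2 + v x ^ 2) +
   (Rpower h (2 / 3)) ^ 2 * ((Derive u x) ^ 2 + (Derive v x) ^ 2)).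

(* Main.v *)
Require Import Defs.
From Stdlib Require Import Reals Lra Psatz Classical.
From Coquelicot Require Import Coquelicot.
Open Scope R_scope.

Lemma pw (om E h t y f f1 V lam p c G D C1 : R) :
  0 < om -> 0 < t -> 0 < h -> h ^ 2 = t ^ 3 -> 0 < y -> 0 < c -> 0 < G -> 0 < E ->
  V - lam >= c * y - G * t -> p ^ 2 <= c / 4 * y ->
  (c / 4 * y < G * t -> om <= E) ->
  D = / G + 2 -> C1 = E * (1 + D * G) ->
  t * (om * (f ^ 2 + t ^ 2 * f1 ^ 2)) <=
  D * (om * (h ^ 2 * f1 ^ 2 + 2 * h * p * f * f1 + (V - lam) * f ^ 2)) + t * (C1 * f ^ 2).
Proof.
  intros Hom Ht Hh Hht Hy Hc HG HE HV Hp HE' HD HC1.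
  assert (Hcy : 0 < c * y) by nra.
  set (m := h * f1 + p * f).
  set (J := om * (h ^ 2 * f1 ^ 2 + 2 * h * p * f * f1 + (V - lam) * f ^ 2)).
  set (K := om * m ^ 2 + om * (c / 2 * y) * f ^ 2).
  assert (HJ : J = om * m ^ 2 + om * (V - lam - p ^ 2) * f ^ 2) by (unfold J, m; ring).
  assert (HK0 : 0 <= K).
  { unfold K. assert (0 <= om * m^2) by (apply Rmult_le_pos; nra).
    assert (0 <= om * (c/2*y) * f^2) by (apply Rmult_le_pos; [apply Rmult_le_pos|]; nra). lra. }
  assert (F1 : h ^ 2 * f1 ^ 2 <= 2 * m ^ 2 + c / 2 * y * f ^ 2).
  { assert (h * f1 = m - p * f) by (unfold m; ring).
    assert (h^2 * f1^2 = (m - p*f)^2) by (rewrite <- H; ring).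
    rewrite H0. assert (p^2 * f^2 <= c/4*y*f^2) by (apply Rmult_le_compat_r; nra).
    assert (0 <= (m + p*f)^2) by apply pow2_ge_0. nra. }
  assert (F2 : t * (t ^ 2 * om * f1 ^ 2) <= 2 * K).
  { replace (t * (t ^ 2 * om * f1 ^ 2)) with (om * (h ^ 2 * f1 ^ 2)) by (rewrite Hht; ring).
    unfold K. apply Rle_trans with (om * (2 * m ^ 2 + c / 2 * y * f ^ 2)).
    apply Rmult_le_compat_l; lra. assert (0 <= om * (c/2*y) * f^2) by (apply Rmult_le_pos;[apply Rmult_le_pos|]; nra). nra. }
  assert (HD2 : 2 <= D) by (rewrite HD; assert (0 < / G) by (apply Rinv_0_lt_compat; lra); lra).
  destruct (Rlt_or_le (c / 4 * y) (G * t)) as [Hcase | Hcase].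
  - specialize (HE' Hcase).
    assert (HJK : K <= J + G * t * E * f ^ 2).
    { rewrite HJ. unfold K.
      assert (om * (V - lam - p^2) * f^2 >= om * (c/2*y) * f^2 - G * t * om * f^2).
      { assert (V - lam - p^2 >= c/2*y - G*t) by lra.
        assert (0 <= om * f^2) by (apply Rmult_le_pos; nra).
        assert (0 <= (om*f^2) * (V-lam-p^2-(c/2*y-G*t))) by (apply Rmult_le_pos; lra).
        nra. }
      assert (G * t * om * f^2 <= G * t * E * f^2).
      { assert (0 <= G*t*f^2) by (apply Rmult_le_pos; [apply Rmult_le_pos|]; nra). nra. }
      lra. }
    assert (om * f^2 <= E * f^2) by (apply Rmult_le_compat_r; nra).
    assert (D * K >= 2 * K) by nra.
    fold J. rewrite HC1.
    replace (t * (om * (f ^ 2 + t ^ 2 * f1 ^ 2))) with (t * (om * f^2) + t * (t ^ 2 * om * f1 ^ 2)) by ring.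
    assert (t * (om * f^2) <= t * (E * f^2)) by (apply Rmult_le_compat_l; lra).
    assert (D * K <= D * (J + G * t * E * f ^ 2)) by (apply Rmult_le_compat_l; lra).
    nra.
  - assert (HJK : K <= J).
    { rewrite HJ. unfold K.
      assert (om * (V - lam - p^2) * f^2 >= om * (c/2*y) * f^2).
      { assert (V - lam - p^2 >= c/2*y) by nra.
        assert (0 <= om * f^2) by (apply Rmult_le_pos; nra). nra. }
      lra. }
    assert (Hof : 2 * G * t * (om * f ^ 2) <= K).
    { unfold K. assert (0 <= om * m^2) by (apply Rmult_le_pos; nra).
      assert (0 <= om * f^2) by (apply Rmult_le_pos; nra).
      assert (2 * G * t <= c/2*y) by lra. nra. }
    fold J.
    assert (t * (om * f^2) <= / G * K).
    { apply Rmult_le_reg_l with (2 * G). lra.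
      replace (2 * G * (/ G * K)) with (2 * K) by (field; lra). nra. }
    assert (0 <= C1 * f^2).
    { rewrite HC1. apply Rmult_le_pos; [|nra]. apply Rmult_le_pos; [lra|].
      assert (0 <= D * G) by nra. lra. }
    assert (D * K <= D * J) by (apply Rmult_le_compat_l; lra).
    replace (t * (om * (f ^ 2 + t ^ 2 * f1 ^ 2))) with (t * (om * f^2) + t * (t ^ 2 * om * f1 ^ 2)) by ring.
    assert (0 <= t * (C1 * f^2)) by (apply Rmult_le_pos; lra).
    rewrite HD in *. nra.
Qed.

Lemma aBO_neg : aBO < 0.
Proof. unfold aBO. assert (0 < sqrt 2) by (apply sqrt_lt_R0; lra). pose proof PI_RGT_0. nra. Qed.

Lemma ballR (x e y : R) : ball x e y <-> Rabs (y - x) < e.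
Proof. reflexivity. Qed.

Lemma at_right_ex (a : R) (P : R -> Prop) : at_right a P ->
  exists d, 0 < d /\ forall y, a < y < a + d -> P y.
Proof.
  intros [d Hd]. exists d. split. apply cond_pos. intros y Hy.
  apply Hd. apply ballR. rewrite Rabs_right; lra. lra.
Qed.

Lemma at_left_ex (a : R) (P : R -> Prop) : at_left a P ->
  exists d, 0 < d /\ forall y, a - d < y < a -> P y.
Proof.
  intros [d Hd]. exists d. split. apply cond_pos. intros y Hy.
  apply Hd. apply ballR. rewrite Rabs_left; lra. lra.
Qed.

Lemma at_right_mk (a b : R) (P : R -> Prop) : a < b -> (forall y, a < y < b -> P y) -> at_right a P.
Proof.
  intros Hab H. exists (mkposreal (b - a) ltac:(lra)). intros y Hy Hay.
  change (Rabs (y - a) < b - a) in Hy. apply H. apply Rabs_def2 in Hy. lra.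
Qed.

Lemma at_left_mk (a b : R) (P : R -> Prop) : a < b -> (forall y, a < y < b -> P y) -> at_left b P.
Proof.
  intros Hab H. exists (mkposreal (b - a) ltac:(lra)). intros y Hy Hay.
  change (Rabs (y - b) < b - a) in Hy. apply H. apply Rabs_def2 in Hy. lra.
Qed.

Lemma exR (g : R -> R) (a b : R) : a <= b -> (forall x, a <= x <= b -> continuous g x) -> ex_RInt g a b.
Proof.
  intros Hab H. apply (@ex_RInt_continuous R_CompleteNormedModule). intros z Hz.
  rewrite Rmin_left in Hz by lra. rewrite Rmax_right in Hz by lra. apply H; lra.
Qed.

Lemma mono_RInt (g : R -> R) (a' a b b' : R) :
  a' <= a -> a <= b -> b <= b' ->
  (forall x, a' <= x <= b' -> continuous g x) ->
  (forall x, a' <= x <= b' -> 0 <= g x) ->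
  RInt g a b <= RInt g a' b'.
Proof.
  intros H1 H2 H3 Hc Hp.
  assert (E1 : ex_RInt g a' a) by (apply exR; [lra| intros; apply Hc; lra]).
  assert (E2 : ex_RInt g a b) by (apply exR; [lra| intros; apply Hc; lra]).
  assert (E3 : ex_RInt g b b') by (apply exR; [lra| intros; apply Hc; lra]).
  assert (E4 : ex_RInt g a' b) by (apply exR; [lra| intros; apply Hc; lra]).
  rewrite <- (RInt_Chasles g a' b b') by assumption.
  rewrite <- (RInt_Chasles g a' a b) by assumption.
  assert (0 <= RInt g a' a) by (apply RInt_ge_0; auto; intros; apply Hp; lra).
  assert (0 <= RInt g b b') by (apply RInt_ge_0; auto; intros; apply Hp; lra).
  unfold plus; simpl. lra.
Qed.

Definition inI2 a b := aBO < a /\ a < b /\ b < 0.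

Lemma gen_lemma (g : R -> R) (K : R) :
  (forall x, in_I x -> continuous g x) ->
  (forall x, in_I x -> 0 <= g x) ->
  (forall a b, inI2 a b -> RInt g a b <= K) ->
  exists l, is_RInt_gen g (at_right aBO) (at_left 0) l /\ l <= K /\
    (forall a b, inI2 a b -> RInt g a b <= l).
Proof.
  intros Hc Hp HK. pose proof aBO_neg as Ha.
  set (S := fun r => exists a b, inI2 a b /\ r = RInt g a b).
  assert (Hb : bound S) by (exists K; intros r [a [b [Hab ->]]]; apply HK; auto).
  assert (Hne : exists r, S r).
  { exists (RInt g (2 * aBO / 3) (aBO / 3)). exists (2 * aBO / 3), (aBO / 3).
    split; [unfold inI2; lra | reflexivity]. }
  destruct (completeness S Hb Hne) as [l [Hub Hlub]].
  assert (Hle : forall a b, inI2 a b -> RInt g a b <= l).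
  { intros a b Hab. apply Hub. exists a, b. auto. }
  exists l. split; [| split].
  - apply filterlimi_lim_ext_loc with (f := fun ab => RInt g (fst ab) (snd ab)).
    + apply Filter_prod with (Q := fun a => aBO < a < aBO / 2) (R := fun b => aBO / 2 < b < 0).
      * apply at_right_mk with (aBO / 2); [lra | auto].
      * apply at_left_mk with (aBO / 2); [lra | auto].
      * intros a b Ha' Hb'. simpl. apply (@RInt_correct R_CompleteNormedModule). apply exR. lra.
        intros x Hx. apply Hc. unfold in_I. lra.
    + apply filterlim_locally. intros eps.
      assert (Hex : exists a0 b0, inI2 a0 b0 /\ l - eps < RInt g a0 b0).
      { apply NNPP. intros Hn.
        assert (l <= l - eps).
        { apply Hlub. intros r [a [b [Hab ->]]].
          apply Rnot_lt_le. intros Hl. apply Hn. exists a, b. auto. }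
        pose proof (cond_pos eps). lra. }
      destruct Hex as [a0 [b0 [[H1 [H2 H3]] H4]]].
      apply Filter_prod with (Q := fun a => aBO < a < a0) (R := fun b => b0 < b < 0).
      * apply at_right_mk with a0; [lra | auto].
      * apply at_left_mk with b0; [lra | auto].
      * intros a b Ha' Hb'. simpl. apply ballR.
        assert (RInt g a0 b0 <= RInt g a b).
        { apply mono_RInt; try lra.
          - intros x Hx. apply Hc. unfold in_I. lra.
          - intros x Hx. apply Hp. unfold in_I. lra. }
        assert (RInt g a b <= l) by (apply Hle; unfold inI2; lra).
        apply Rabs_def1; lra.
  - apply Hlub. intros r [a [b [Hab ->]]]. apply HK; auto.
  - exact Hle.
Qed.

Lemma lim_sq (F : (R -> Prop) -> Prop) {FF : Filter F} (u v : R -> R) :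
  filterlim u F (locally 0) -> filterlim v F (locally 0) ->
  forall d, 0 < d -> F (fun z => u z ^ 2 + v z ^ 2 < d).
Proof.
  intros Hu Hv d Hd.
  set (e := Rmin 1 (d / 2)).
  assert (He : 0 < e) by (unfold e; apply Rmin_pos; lra).
  assert (He1 : e <= 1) by apply Rmin_l.
  assert (He2 : e <= d / 2) by apply Rmin_r.
  apply filterlim_locally with (eps := mkposreal e He) in Hu.
  apply filterlim_locally with (eps := mkposreal e He) in Hv.
  generalize (filter_and _ _ Hu Hv). apply filter_imp.
  intros z [H1 H2]. change (Rabs (u z - 0) < e) in H1. change (Rabs (v z - 0) < e) in H2.
  rewrite Rminus_0_r in H1, H2.
  assert (u z ^ 2 < e ^ 2).
  { rewrite <- (pow2_abs (u z)). pose proof (Rabs_pos (u z)). nra. }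
  assert (v z ^ 2 < e ^ 2).
  { rewrite <- (pow2_abs (v z)). pose proof (Rabs_pos (v z)). nra. }
  nra.
Qed.

Lemma bound_lemma (f : R -> R) :
  (forall x, in_I x -> continuous f x) ->
  filterlim f (at_right aBO) (locally 0) -> filterlim f (at_left 0) (locally 0) ->
  exists M, forall x, in_I x -> Rabs (f x) <= M.
Proof.
  intros Hc H1 H2. pose proof aBO_neg as Ha.
  apply filterlim_locally with (eps := mkposreal 1 Rlt_0_1) in H1.
  apply filterlim_locally with (eps := mkposreal 1 Rlt_0_1) in H2.
  apply at_right_ex in H1. destruct H1 as [d1 [Hd1 H1]].
  apply at_left_ex in H2. destruct H2 as [d2 [Hd2 H2]].
  set (a1 := aBO + Rmin (d1 / 2) (- aBO / 3)).
  set (b1 := - Rmin (d2 / 2) (- aBO / 3)).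
  assert (Ha1 : aBO < a1 /\ a1 < aBO + d1 /\ a1 <= aBO + - aBO / 3).
  { unfold a1. split; [|split].
    - assert (0 < Rmin (d1 / 2) (- aBO / 3)) by (apply Rmin_pos; lra). lra.
    - pose proof (Rmin_l (d1 / 2) (- aBO / 3)). lra.
    - pose proof (Rmin_r (d1 / 2) (- aBO / 3)). lra. }
  assert (Hb1 : b1 < 0 /\ - d2 < b1 /\ - (- aBO / 3) <= b1).
  { unfold b1. split; [|split].
    - assert (0 < Rmin (d2 / 2) (- aBO / 3)) by (apply Rmin_pos; lra). lra.
    - pose proof (Rmin_l (d2 / 2) (- aBO / 3)). lra.
    - pose proof (Rmin_r (d2 / 2) (- aBO / 3)). lra. }
  destruct (continuity_ab_maj (fun x => Rabs (f x)) a1 b1) as [mx [Hmx _]].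
  - lra.
  - intros c Hc'. apply (continuity_pt_comp f Rabs c).
    + apply continuity_pt_filterlim. apply Hc. unfold in_I. lra.
    + apply Rcontinuity_abs.
  - exists (1 + Rabs (f mx)). intros x Hx. unfold in_I in Hx.
    pose proof (Rabs_pos (f mx)).
    destruct (Rle_or_lt x a1) as [Hxa | Hxa].
    + assert (Rabs (f x - 0) < 1) by (apply (H1 x); lra). rewrite Rminus_0_r in H0. lra.
    + destruct (Rle_or_lt b1 x) as [Hxb | Hxb].
      * assert (Rabs (f x - 0) < 1) by (apply (H2 x); lra). rewrite Rminus_0_r in H0. lra.
      * assert (Rabs (f x) <= Rabs (f mx)) by (apply Hmx; lra). lra.
Qed.

Lemma right_end (q Z : R -> R) (b : R) :
  aBO < b < 0 ->
  (forall x, in_I x -> is_derive q x (2 * Z x)) ->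
  (forall x, in_I x -> 0 <= q x) ->
  (forall x, in_I x -> q x = 0 -> Z x = 0) ->
  (forall d, 0 < d -> at_left 0 (fun z => q z < d)) ->
  forall eps, 0 < eps -> exists y, b < y < 0 /\ Z y < eps.
Proof.
  intros Hb Hd Hp H0 Hl eps Heps. apply NNPP. intros Hn.
  assert (HZ : forall y, b < y < 0 -> eps <= Z y).
  { intros y Hy. apply Rnot_lt_le. intros Hy'. apply Hn. exists y. auto. }
  set (y := b / 2).
  assert (Hq : forall d, 0 < d -> q y < d).
  { intros d Hdd. destruct (at_left_ex _ _ (Hl d Hdd)) as [d0 [Hd0 Hz]].
    set (z := Rmax y (- d0) / 2).
    assert (Hy1 : y <= Rmax y (- d0)) by apply Rmax_l.
    assert (Hy2 : - d0 <= Rmax y (- d0)) by apply Rmax_r.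
    assert (Hy3 : Rmax y (- d0) < 0) by (apply Rmax_lub_lt; unfold y; lra).
    assert (Hz1 : y < z < 0) by (unfold z; lra).
    assert (Hqz : q z < d) by (apply Hz; unfold z; lra).
    destruct (MVT_gen q y z (fun x => 2 * Z x)) as [c [Hc Hmvt]].
    - intros x Hx. rewrite Rmin_left in Hx by lra. rewrite Rmax_right in Hx by lra.
      apply Hd. unfold in_I, y in *. lra.
    - intros x Hx. rewrite Rmin_left in Hx by lra. rewrite Rmax_right in Hx by lra.
      apply continuity_pt_filterlim. apply (@ex_derive_continuous R_AbsRing R_NormedModule q x). eexists. apply Hd.
      unfold in_I, y in *. lra.
    - rewrite Rmin_left in Hc by lra. rewrite Rmax_right in Hc by lra.
      assert (eps <= Z c) by (apply HZ; unfold y in *; lra).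
      assert (0 <= 2 * Z c * (z - y)) by (apply Rmult_le_pos; lra). lra. }
  assert (Hy0 : in_I y) by (unfold in_I, y; lra).
  assert (q y = 0).
  { apply Rle_antisym. apply Rnot_lt_le. intros Hlt. specialize (Hq (q y) Hlt). lra. auto. }
  assert (Z y = 0) by auto.
  assert (eps <= Z y) by (apply HZ; unfold y; lra). lra.
Qed.

Lemma left_end (q Z : R -> R) (a : R) :
  aBO < a < 0 ->
  (forall x, in_I x -> is_derive q x (2 * Z x)) ->
  (forall x, in_I x -> 0 <= q x) ->
  (forall x, in_I x -> q x = 0 -> Z x = 0) ->
  (forall d, 0 < d -> at_right aBO (fun z => q z < d)) ->
  forall eps, 0 < eps -> exists y, aBO < y < a /\ - eps < Z y.
Proof.
  intros Hb Hd Hp H0 Hl eps Heps. apply NNPP. intros Hn.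
  assert (HZ : forall y, aBO < y < a -> Z y <= - eps).
  { intros y Hy. apply Rnot_lt_le. intros Hy'. apply Hn. exists y. auto. }
  set (y := (aBO + a) / 2).
  assert (Hq : forall d, 0 < d -> q y < d).
  { intros d Hdd. destruct (at_right_ex _ _ (Hl d Hdd)) as [d0 [Hd0 Hz]].
    set (z := (aBO + Rmin y (aBO + d0)) / 2).
    assert (Hy1 : Rmin y (aBO + d0) <= y) by apply Rmin_l.
    assert (Hy2 : Rmin y (aBO + d0) <= aBO + d0) by apply Rmin_r.
    assert (Hy3 : aBO < Rmin y (aBO + d0)) by (apply Rmin_glb_lt; unfold y; lra).
    assert (Hz1 : aBO < z < y) by (unfold z; lra).
    assert (Hqz : q z < d) by (apply Hz; unfold z; lra).
    destruct (MVT_gen q z y (fun x => 2 * Z x)) as [c [Hc Hmvt]].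
    - intros x Hx. rewrite Rmin_left in Hx by lra. rewrite Rmax_right in Hx by lra.
      apply Hd. unfold in_I, y in *. lra.
    - intros x Hx. rewrite Rmin_left in Hx by lra. rewrite Rmax_right in Hx by lra.
      apply continuity_pt_filterlim. apply (@ex_derive_continuous R_AbsRing R_NormedModule q x). eexists. apply Hd.
      unfold in_I, y in *. lra.
    - rewrite Rmin_left in Hc by lra. rewrite Rmax_right in Hc by lra.
      assert (Z c <= - eps) by (apply HZ; unfold y in *; lra).
      assert (2 * Z c * (y - z) <= 0).
      { assert (0 <= (- (2 * Z c)) * (y - z)) by (apply Rmult_le_pos; lra). lra. }
      lra. }
  assert (Hy0 : in_I y) by (unfold in_I, y; lra).
  assert (q y = 0).
  { apply Rle_antisym. apply Rnot_lt_le. intros Hlt. specialize (Hq (q y) Hlt). lra. auto. }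
  assert (Z y = 0) by auto.
  assert (Z y <= - eps) by (apply HZ; unfold y; lra). lra.
Qed.

Definition PP := PI * sqrt 2.

Lemma PP_pos : 3 < PP.
Proof.
  unfold PP. pose proof PI_RGT_0. pose proof (PI_ineq 0).
  assert (1 < sqrt 2). { rewrite <- sqrt_1. apply sqrt_lt_1_alt. lra. }
  pose proof PI2_3_2. nra.
Qed.

Lemma aBO_PP : aBO = - PP.
Proof. reflexivity. Qed.

Lemma expmono x y : x <= y -> exp x <= exp y.
Proof. intros [H|H]. left; apply exp_increasing; auto. right; subst; auto. Qed.

Lemma V_lb (x : R) : in_I x -> VBO x - 1 / 8 >= / (8 * PP) * (- x).
Proof.
  unfold in_I. rewrite aBO_PP. intros [H1 H2]. pose proof PP_pos.
  assert (HP2 : PI ^ 2 = PP ^ 2 / 2).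
  { unfold PP. replace ((PI * sqrt 2) ^ 2) with (PI ^ 2 * (sqrt 2 * sqrt 2)) by ring.
    rewrite sqrt_sqrt by lra. field. }
  unfold VBO. fold PP. rewrite HP2. set (s := x + PP).
  assert (0 < s) by (unfold s; lra). assert (s < PP) by (unfold s; lra).
  replace (-x) with (PP - s) by (unfold s; ring).
  assert (Heq : PP ^ 2 / 2 / (4 * s ^ 2) - 1 / 8 - / (8 * PP) * (PP - s) =
           (PP - s) * (PP * (PP + s) - s ^ 2) / (8 * PP * s ^ 2)) by (field; lra).
  assert (0 <= (PP - s) * (PP * (PP + s) - s ^ 2) / (8 * PP * s ^ 2)).
  { apply Rmult_le_pos. apply Rmult_le_pos; nra. left. apply Rinv_0_lt_compat. nra. }
  lra.
Qed.

Lemma Rpower32 (y : R) : 0 < y -> Rpower y (3 / 2) = y * sqrt y.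
Proof.
  intros Hy. replace (3 / 2) with (1 + / 2) by field.
  rewrite Rpower_plus, Rpower_1, Rpower_sqrt; auto.
Qed.

Lemma t_facts (h : R) : 0 < h ->
  0 < Rpower h (2 / 3) /\ Rpower h (2 / 3) * sqrt (Rpower h (2 / 3)) = h /\
  h ^ 2 = Rpower h (2 / 3) ^ 3.
Proof.
  intros Hh. set (t := Rpower h (2 / 3)).
  assert (Ht : 0 < t) by (unfold t, Rpower; apply exp_pos).
  assert (H1 : t * sqrt t = h).
  { rewrite <- Rpower_sqrt by auto. unfold t. rewrite Rpower_mult, <- Rpower_plus.
    replace (2 / 3 + 2 / 3 * / 2) with 1 by field. apply Rpower_1; auto. }
  split; auto. split; auto.
  rewrite <- H1. replace ((t * sqrt t) ^ 2) with (t ^ 2 * (sqrt t * sqrt t)) by ring.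
  rewrite sqrt_sqrt by lra. ring.
Qed.

Lemma ysqrt_mono (y z : R) : 0 <= y -> y <= z -> y * sqrt y <= z * sqrt z.
Proof.
  intros. assert (sqrt y <= sqrt z) by (apply sqrt_le_1_alt; auto).
  pose proof (sqrt_pos y). nra.
Qed.

Definition om (eta h x : R) := exp (eta / h * ((- x) * sqrt (- x))).

Lemma agmon_eq eta h u v x : x < 0 ->
  agmon_integrand eta h u v x = om eta h x * ((u x ^ 2 + v x ^ 2) +
     Rpower h (2 / 3) ^ 2 * (Derive u x ^ 2 + Derive v x ^ 2)).
Proof.
  intros Hx. unfold agmon_integrand, om. rewrite Rabs_left by auto.
  rewrite Rpower32 by lra. reflexivity.
Qed.

Section S.
Variables (h lam k : R) (f : R -> R).
Hypothesis Hh : 0 < h.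
Hypothesis Hf : eigen_fun h lam f.

Definition Jf x := om (2 * k) h x * (h ^ 2 * Derive f x ^ 2 +
   2 * h * (- (3 / 2) * k * sqrt (- x)) * f x * Derive f x + (VBO x - lam) * f x ^ 2).

Lemma Hd1 x : in_I x -> ex_derive f x.
Proof. intros; apply Hf; auto. Qed.
Lemma Hd2 x : in_I x -> ex_derive (Derive f) x.
Proof. intros; apply Hf; auto. Qed.

Lemma Jf_der x : in_I x ->
  is_derive (fun y => h ^ 2 * (om (2 * k) h y * (f y * Derive f y))) x (Jf x).
Proof.
  intros Hx. pose proof (Hd1 x Hx). pose proof (Hd2 x Hx).
  destruct Hx as [Hx1 Hx2].
  unfold om, Jf. auto_derive.
  - repeat split; auto; lra.
  - change (Derive (fun x0 : R => f x0) x) with (Derive f x).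
    change (Derive (fun x0 : R => Derive f x0) x) with (Derive (Derive f) x).
    assert (Hode : - h ^ 2 * Derive (Derive f) x + VBO x * f x = lam * f x)
      by (apply Hf; split; auto).
    assert (Hdd : Derive (Derive f) x = (VBO x - lam) * f x / h ^ 2)
      by (apply Rmult_eq_reg_l with (h ^ 2); [field_simplify; lra | nra]).
    rewrite Hdd. unfold om.
    assert (Hs : sqrt (- x) * sqrt (- x) = - x) by (apply sqrt_sqrt; lra).
    assert (Hs0 : 0 < sqrt (- x)) by (apply sqrt_lt_R0; lra).
    set (s := sqrt (- x)) in *. set (e := exp (2 * k / h * (- x * s))).
    rewrite <- Hs. field. lra.
Qed.

Lemma cont_f x : in_I x -> continuous f x.
Proof. intros Hx. apply (@ex_derive_continuous R_AbsRing R_NormedModule). apply Hd1; auto. Qed.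
Lemma cont_df x : in_I x -> continuous (Derive f) x.
Proof. intros Hx. apply (@ex_derive_continuous R_AbsRing R_NormedModule). apply Hd2; auto. Qed.

Lemma cont_Jf x : in_I x -> continuous Jf x.
Proof.
  intros Hx. apply (@ex_derive_continuous R_AbsRing R_NormedModule).
  pose proof (Hd1 x Hx). pose proof (Hd2 x Hx). destruct Hx as [Hx1 Hx2].
  assert (x + PI * sqrt 2 <> 0) by (unfold aBO in Hx1; lra).
  unfold Jf, om, VBO. auto_derive.
  repeat split; auto; try lra. intro Hc; apply H1; nra.
Qed.
End S.

Theorem proposition4p3 (Gamma0 : R) :
  0 < Gamma0 ->
  exists h0 C0 eta0 : R, 0 < h0 /\ 0 < C0 /\ 0 < eta0 /\
    forall (h lam : R) (u v : R -> R),
      0 < h < h0 ->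
      is_eigenpair h lam u v ->
      Rabs (lam - 1 / 8) <= Gamma0 * Rpower h (2 / 3) ->
      ex_RInt_gen (agmon_integrand eta0 h u v) (at_right aBO) (at_left 0) /\
      RInt_gen (agmon_integrand eta0 h u v) (at_right aBO) (at_left 0)
        <= C0 * L2sq u v.
Proof.
  intros HG.
  pose proof PP_pos as HPP.
  set (c := / (8 * PP)).
  assert (Hc : 0 < c) by (unfold c; apply Rinv_0_lt_compat; lra).
  assert (Hc1 : c < 1).
  { unfold c. apply Rmult_lt_reg_l with (8 * PP). lra. rewrite Rinv_r by lra. lra. }
  set (k := c / 9).
  set (RR := 4 * Gamma0 / c).
  assert (HRR : 0 < RR) by (unfold RR; apply Rdiv_lt_0_compat; lra).
  set (E := exp (2 * k * RR * sqrt RR)).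
  set (D := / Gamma0 + 2).
  assert (HD : 2 < D) by (unfold D; assert (0 < / Gamma0) by (apply Rinv_0_lt_compat; lra); lra).
  set (C1 := E * (1 + D * Gamma0)).
  assert (HE : 0 < E) by apply exp_pos.
  assert (HC1 : 0 < C1) by (unfold C1; apply Rmult_lt_0_compat; nra).
  exists 1, C1, (2 * k). split; [lra|]. split; [auto|]. split; [unfold k; lra|].
  intros h lam u v [Hh0 Hh1] [Hu [Hv _]] Hlam.
  destruct (t_facts h Hh0) as [Ht [Hts Hht]]. set (t := Rpower h (2 / 3)) in *.
  set (om0 := om (2 * k) h).
  assert (Hpw : forall f, eigen_fun h lam f -> forall x, in_I x ->
     t * (om0 x * (f x ^ 2 + t ^ 2 * Derive f x ^ 2)) <= D * Jf h lam k f x + t * (C1 * f x ^ 2)).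
  { intros f Hf x Hx. pose proof (V_lb x Hx) as HV. fold c in HV.
    destruct Hx as [Hx1 Hx2].
    assert (Hsq : sqrt (- x) * sqrt (- x) = - x) by (apply sqrt_sqrt; lra).
    unfold Jf. apply pw with (E := E) (y := - x) (c := c) (G := Gamma0); auto; try lra.
    - apply exp_pos.
    - assert (lam - 1/8 <= Gamma0 * t) by (eapply Rle_trans; [apply Rle_abs | exact Hlam]). lra.
    - replace ((- (3 / 2) * k * sqrt (- x)) ^ 2) with (9 / 4 * k ^ 2 * (sqrt (- x) * sqrt (- x))) by field.
      rewrite Hsq. unfold k. assert (0 < - x) by lra. assert (9 / 4 * (c / 9) ^ 2 <= c / 4) by nra. apply Rmult_le_compat_r; lra.
    - intros Hlt. unfold om0, om, E. apply expmono.
      assert (Hy : - x <= RR * t).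
      { unfold RR. apply Rmult_le_reg_l with (c / 4). lra.
        replace (c / 4 * (4 * Gamma0 / c * t)) with (Gamma0 * t) by (field; lra). lra. }
      assert (Hm : - x * sqrt (- x) <= (RR * t) * sqrt (RR * t)) by (apply ysqrt_mono; lra).
      rewrite sqrt_mult_alt in Hm by lra.
      replace (RR * t * (sqrt RR * sqrt t)) with (RR * sqrt RR * (t * sqrt t)) in Hm by ring.
      rewrite Hts in Hm.
      apply Rmult_le_reg_l with h. auto.
      replace (h * (2 * k / h * (- x * sqrt (- x)))) with (2 * k * (- x * sqrt (- x))) by (field; lra).
      assert (0 <= k) by (unfold k; lra). nra. }
  set (A := agmon_integrand (2 * k) h u v).
  set (qf := fun x => u x ^ 2 + v x ^ 2).
  set (Zf := fun x => u x * Derive u x + v x * Derive v x).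
  set (Gf := fun x => Jf h lam k u x + Jf h lam k v x).
  set (Hf := fun x => h ^ 2 * (om (2 * k) h x * (u x * Derive u x)) +
                      h ^ 2 * (om (2 * k) h x * (v x * Derive v x))).
  assert (HAeq : forall x, in_I x -> A x = om0 x * (qf x + t ^ 2 * (Derive u x ^ 2 + Derive v x ^ 2))).
  { intros x Hx. unfold A, qf, om0. apply agmon_eq. apply Hx. }
  assert (HAle : forall x, in_I x -> t * A x <= D * Gf x + t * (C1 * qf x)).
  { intros x Hx. rewrite (HAeq x Hx). pose proof (Hpw u Hu x Hx). pose proof (Hpw v Hv x Hx).
    unfold Gf, qf. 
    replace (t * (om0 x * (u x ^ 2 + v x ^ 2 + t ^ 2 * (Derive u x ^ 2 + Derive v x ^ 2))))
      with (t * (om0 x * (u x ^ 2 + t ^ 2 * Derive u x ^ 2)) + t * (om0 x * (v x ^ 2 + t ^ 2 * Derive v x ^ 2))) by ring.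
    lra. }
  assert (Hom0 : forall x, 0 < om0 x) by (intros; apply exp_pos).
  assert (HA0 : forall x, in_I x -> 0 <= A x).
  { intros x Hx. rewrite (HAeq x Hx). apply Rmult_le_pos. left; auto.
    unfold qf. assert (0 <= t ^ 2) by nra. nra. }
  assert (Hq0 : forall x, 0 <= qf x) by (intros; unfold qf; nra).
  assert (HcA : forall x, in_I x -> continuous A x).
  { intros x Hx.
    apply continuous_ext_loc with (fun y => om0 y * (qf y + t ^ 2 * (Derive u y ^ 2 + Derive v y ^ 2))).
    - assert (Hl : locally x (fun y => y < 0)) by (apply open_lt; apply Hx).
      assert (Hl2 : locally x (fun y => aBO < y)) by (apply open_gt; apply Hx).
      generalize (filter_and _ _ Hl Hl2). apply filter_imp. intros y [Hy1 Hy2].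
      symmetry. apply HAeq. split; auto.
    - apply (@ex_derive_continuous R_AbsRing R_NormedModule).
      pose proof (Hd1 h lam u Hu x Hx). pose proof (Hd2 h lam u Hu x Hx).
      pose proof (Hd1 h lam v Hv x Hx). pose proof (Hd2 h lam v Hv x Hx).
      destruct Hx as [Hx1 Hx2].
      unfold om0, om, qf. auto_derive. repeat split; auto; lra. }
  assert (Hcq : forall x, in_I x -> continuous qf x).
  { intros x Hx. apply (@ex_derive_continuous R_AbsRing R_NormedModule).
    pose proof (Hd1 h lam u Hu x Hx). pose proof (Hd1 h lam v Hv x Hx).
    unfold qf. auto_derive. repeat split; auto. }
  assert (HcG : forall x, in_I x -> continuous Gf x).
  { intros x Hx. unfold Gf. apply (continuous_plus (fun y => Jf h lam k u y) (fun y => Jf h lam k v y)).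
    apply cont_Jf; auto. apply cont_Jf; auto. }
  assert (HderH : forall x, in_I x -> is_derive Hf x (Gf x)).
  { intros x Hx. unfold Hf, Gf.
    apply (is_derive_plus (fun y => h ^ 2 * (om (2 * k) h y * (u y * Derive u y)))
                          (fun y => h ^ 2 * (om (2 * k) h y * (v y * Derive v y)))).
    apply Jf_der; auto. apply Jf_der; auto. }
  assert (Hderq : forall x, in_I x -> is_derive qf x (2 * Zf x)).
  { intros x Hx. pose proof (Hd1 h lam u Hu x Hx). pose proof (Hd1 h lam v Hv x Hx).
    unfold qf, Zf. auto_derive. repeat split; auto.
    change (Derive (fun x0 : R => u x0) x) with (Derive u x).
    change (Derive (fun x0 : R => v x0) x) with (Derive v x). ring. }
  pose proof Hu as [_ [_ [_ [Hur Hul]]]].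
  pose proof Hv as [_ [_ [_ [Hvr Hvl]]]].
  destruct (bound_lemma u (cont_f h lam u Hu) Hur Hul) as [Mu HMu].
  destruct (bound_lemma v (cont_f h lam v Hv) Hvr Hvl) as [Mv HMv].
  assert (HKq : forall a b, inI2 a b -> RInt qf a b <= (Mu ^ 2 + Mv ^ 2) * PP).
  { intros a b [Ha [Hab Hb]].
    apply Rle_trans with (RInt (fun _ => Mu ^ 2 + Mv ^ 2) a b).
    - apply RInt_le. lra.
      + apply exR. lra. intros x Hx. apply Hcq. unfold in_I; lra.
      + apply ex_RInt_const.
      + intros x Hx. assert (Hx' : in_I x) by (unfold in_I; lra).
        pose proof (HMu x Hx'). pose proof (HMv x Hx').
        pose proof (Rabs_pos (u x)). pose proof (Rabs_pos (v x)).
        unfold qf. rewrite <- (pow2_abs (u x)), <- (pow2_abs (v x)). nra.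
    - rewrite RInt_const. unfold scal; simpl; unfold mult; simpl.
      rewrite aBO_PP in Ha. assert (0 <= Mu ^ 2 + Mv ^ 2) by nra. nra. }
  destruct (gen_lemma qf _ Hcq (fun x _ => Hq0 x) HKq) as [lq [Hlqg [_ Hlq]]].
  assert (HL2 : L2sq u v = lq) by (unfold L2sq; apply is_RInt_gen_unique; exact Hlqg).
  set (Om := exp (2 * k / h * (PP * sqrt PP))).
  assert (HOm : forall x, in_I x -> om0 x <= Om).
  { intros x [Hx1 Hx2]. unfold om0, om, Om. apply expmono. rewrite aBO_PP in Hx1.
    assert (- x * sqrt (- x) <= PP * sqrt PP) by (apply ysqrt_mono; lra).
    assert (0 <= 2 * k / h) by (apply Rle_mult_inv_pos; unfold k; lra).
    apply Rmult_le_compat_l; auto. }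
  assert (HOm0 : 0 < Om) by apply exp_pos.
  assert (HZ0 : forall x, in_I x -> qf x = 0 -> Zf x = 0).
  { intros x _ Hq. unfold qf in Hq. assert (u x = 0) by nra. assert (v x = 0) by nra.
    unfold Zf. rewrite H, H0. ring. }
  assert (Hqr : forall d, 0 < d -> at_right aBO (fun z => qf z < d))
    by (intros d Hd; exact (lim_sq (at_right aBO) u v Hur Hvr d Hd)).
  assert (Hql : forall d, 0 < d -> at_left 0 (fun z => qf z < d))
    by (intros d Hd; exact (lim_sq (at_left 0) u v Hul Hvl d Hd)).
  assert (HkeyA : forall a b, inI2 a b -> RInt A a b <= C1 * lq).
  { intros a b [Ha [Hab Hb]]. apply le_epsilon. intros eps Heps.
    set (Kb := 2 * D * h ^ 2 * Om / t).
    assert (Hh2 : 0 < h ^ 2) by nra.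
    assert (HKb : 0 < Kb) by (unfold Kb; apply Rdiv_lt_0_compat; [repeat apply Rmult_lt_0_compat|]; lra).
    set (ep := eps / Kb).
    assert (Hep : 0 < ep) by (unfold ep; apply Rdiv_lt_0_compat; auto).
    destruct (right_end qf Zf b ltac:(lra) Hderq (fun x _ => Hq0 x) HZ0 Hql ep Hep) as [b' [Hb' HZb]].
    destruct (left_end qf Zf a ltac:(lra) Hderq (fun x _ => Hq0 x) HZ0 Hqr ep Hep) as [a' [Ha' HZa]].
    assert (HI : forall x, a' <= x <= b' -> in_I x) by (intros; unfold in_I; lra).
    assert (H1 : RInt A a b <= RInt A a' b').
    { apply mono_RInt; try lra; intros x Hx; [apply HcA | apply HA0]; auto. }
    assert (I1 : is_RInt Gf a' b' (Hf b' - Hf a')).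
    { apply (is_RInt_derive Hf Gf).
      - intros x Hx. rewrite Rmin_left in Hx by lra. rewrite Rmax_right in Hx by lra. apply HderH; auto.
      - intros x Hx. rewrite Rmin_left in Hx by lra. rewrite Rmax_right in Hx by lra. apply HcG; auto. }
    assert (Eq : ex_RInt qf a' b') by (apply exR; [lra | intros; apply Hcq; auto]).
    assert (EA : ex_RInt A a' b') by (apply exR; [lra | intros; apply HcA; auto]).
    assert (I2 : is_RInt (fun x => D * Gf x + t * (C1 * qf x)) a' b'
                   (D * (Hf b' - Hf a') + t * (C1 * RInt qf a' b'))).
    { exact (is_RInt_plus _ _ _ _ _ _ (is_RInt_scal _ _ _ D _ I1)
               (is_RInt_scal _ _ _ t _ (is_RInt_scal _ _ _ C1 _ (RInt_correct _ _ _ Eq)))). }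
    assert (I3 : is_RInt (fun x => t * A x) a' b' (t * RInt A a' b')).
    { exact (is_RInt_scal _ _ _ t _ (RInt_correct _ _ _ EA)). }
    assert (H2 : t * RInt A a' b' <= D * (Hf b' - Hf a') + t * (C1 * RInt qf a' b')).
    { apply (is_RInt_le _ _ a' b' _ _ ltac:(lra) I3 I2). intros x Hx. apply HAle, HI; lra. }
    assert (H3 : RInt qf a' b' <= lq) by (apply Hlq; unfold inI2; lra).
    assert (HHf : forall x, Hf x = h ^ 2 * (om0 x * Zf x)) by (intros; unfold Hf, Zf, om0; ring).
    assert (Hbb : om0 b' * Zf b' <= Om * ep).
    { pose proof (HOm b' ltac:(apply HI; lra)). pose proof (Hom0 b').
      destruct (Rle_or_lt (Zf b') 0). nra. nra. }
    assert (Haa : - (om0 a' * Zf a') <= Om * ep).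
    { pose proof (HOm a' ltac:(apply HI; lra)). pose proof (Hom0 a').
      destruct (Rle_or_lt 0 (Zf a')). nra. nra. }
    rewrite !HHf in H2.
    assert (HB : D * (h ^ 2 * (om0 b' * Zf b') - h ^ 2 * (om0 a' * Zf a')) <= t * eps).
    { assert (D * h ^ 2 * (2 * Om * ep) = t * eps).
      { unfold ep, Kb. field. repeat split; lra. }
      assert (0 <= D * h ^ 2) by nra. nra. }
    assert (t * RInt A a b <= t * (C1 * lq + eps)).
    { assert (t * RInt A a b <= t * RInt A a' b') by (apply Rmult_le_compat_l; lra).
      assert (t * (C1 * RInt qf a' b') <= t * (C1 * lq)).
      { apply Rmult_le_compat_l. lra. apply Rmult_le_compat_l; lra. }
      nra. }
    apply Rmult_le_reg_l with t; auto. }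
  destruct (gen_lemma A (C1 * lq) HcA HA0 HkeyA) as [l [HlA [Hl _]]].
  split. exists l; exact HlA.
  rewrite (is_RInt_gen_unique _ _ HlA), HL2. exact Hl.
Qed.
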